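(* Let $n\ge 1$. The number of preference profiles with $n$ men and $n$ women that have at least one pair of outcasts equals $n^4 (n-1)!^{2n}$ if $n\neq 2$, and equals $14$ if $n=2$.
   Context: A preference profile for $n$ (labeled) men and $n$ (labeled) women consists of, for each man, a strict ranking of the women (bijection to $\{1,\dots,n\}$, 1 = favorite, $n$ = least favorite), and for each woman, a strict ranking of the men. A man $M$ and a woman $W$ form a pair of outcasts if every woman other than $W$ ranks $M$ last (rank $n$) and every man other than $M$ ranks $W$ last (rank $n$); the rankings $M$ and $W$ give each other are arbitrary. *)

(* Defs.v *)
From mathcomp Require Import all_boot all_fingroup.
Set Implicit Arguments. Unset Strict Implicit. Unset Printing Implicit Defensive.

(* A strict ranking is a bijection
   'I_n -> 'I_n (a permutation); rank 0 is the favourite and rank n.-1 the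
   least favourite (0-based version of the paper's ranks 1..n). *)
Definition ranking (n : nat) := {perm 'I_n}.

Definition profile (n : nat) :=
  ({ffun 'I_n -> ranking n} * {ffun 'I_n -> ranking n})%type.

Definition men_pref n (p : profile n) : 'I_n -> ranking n := p.1.
Definition women_pref n (p : profile n) : 'I_n -> ranking n := p.2.

Definition outcasts n (p : profile n) (M W : 'I_n) : bool :=
  [forall W' : 'I_n, (W' != W) ==> (nat_of_ord (women_pref p W' M) == n.-1)] &&
  [forall M' : 'I_n, (M' != M) ==> (nat_of_ord (men_pref p M' W) == n.-1)].

Definition has_outcasts n (p : profile n) : bool :=
  [exists M : 'I_n, exists W : 'I_n, outcasts p M W].

(* Main.v *)
Require Import Defs.
From mathcomp Require Import all_boot all_fingroup zify.
Set Implicit Arguments. Unset Strict Implicit. Unset Printing Implicit Defensive.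

Lemma foldr_prod (s : seq nat) : foldr muln 1 s = \prod_(i <- s) i.
Proof. by elim: s => [|a s IH]; rewrite ?big_nil ?big_cons //= IH. Qed.

Lemma card_fixval n (M k : 'I_n) :
  #|[pred s : {perm 'I_n} | s M == k]| = (n.-1)`!.
Proof.
set t := tperm M k.
rewrite (@eq_card _ _ [set u * t | u in perm_on [set~ M]]%g); last first.
  move=> s; rewrite !inE; apply/eqP/imsetP => [sM|[u Hu ->]].
    exists (s * t)%g; last by rewrite /t -mulgA tperm2 mulg1.
    apply/subsetP => x; rewrite !inE; apply: contra => /eqP ->.
    by rewrite permM sM tpermR.
  by rewrite permM (out_perm Hu) ?tpermL // !inE eqxx.
- by rewrite card_imset ?card_perm ?cardsC1 ?card_ord //; apply: mulIg.
Qed.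

Definition fixlast n (M W : 'I_n) (g : {ffun 'I_n -> ranking n}) : bool :=
  [forall W', (W' != W) ==> (nat_of_ord (g W' M) == n.-1)].

Lemma card_fixlast n (hn : 0 < n) (M W : 'I_n) :
  #|[pred g | fixlast M W g]| = n`! * (n.-1)`! ^ n.-1.
Proof.
have kn : n.-1 < n by rewrite prednK.
pose k := Ordinal kn.
pose F := fun x : 'I_n => if x == W then [pred s : {perm 'I_n} | true]
                          else [pred s : {perm 'I_n} | s M == k].
rewrite (@eq_card _ _ (family F)); last first.
  move=> g; rewrite !inE /fixlast; apply/forallP/familyP => H x; have := H x;
    rewrite /F; case: eqP => //= _.
rewrite card_family foldr_prod big_map big_enum /=.
rewrite (bigD1 W) //= /F eqxx.
rewrite (eq_bigr (fun _ => (n.-1)`!)); last first.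
  by move=> i /negPf ->; rewrite card_fixval.
rewrite prod_nat_const.
have -> : #|[pred i | true && (i != W)]| = n.-1 by rewrite (eq_card (B:=predC1 W)) // cardC1 card_ord.
congr (_ * _).
rewrite (eq_card (B:=perm_on setT)) ?card_perm ?cardsT ?card_ord //.
by move=> s; rewrite !inE; apply/esym/subsetP => x; rewrite inE.
Qed.

Lemma card_out n (hn : 0 < n) (M W : 'I_n) :
  #|[pred p : profile n | outcasts p M W]| = (n`! * (n.-1)`! ^ n.-1) ^ 2.
Proof.
rewrite (eq_card (B:= setX [set g | fixlast W M g] [set g | fixlast M W g])).
  by rewrite cardsX !cardsE !card_fixlast.
by move=> [f g]; rewrite !inE /outcasts andbC.
Qed.

Lemma third n (hn : 2 < n) (a b : 'I_n) : exists c : 'I_n, (c != a) && (c != b).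
Proof.
have : 0 < #|~: [set a; b]|.
  have := cardsC [set a; b]; rewrite cards2 card_ord.
  case: (a != b) => /= E; lia.
by case/card_gt0P => c; rewrite !inE negb_or => ?; exists c.
Qed.

Lemma out_uniq n (hn : n != 2) (p : profile n) M W M2 W2 :
  outcasts p M W -> outcasts p M2 W2 -> (M2, W2) = (M, W).
Proof.
case: n hn p M W M2 W2 => [|[|[|n]]] //= _ p M W M2 W2.
- by case: M.
- by move=> _ _; case: M M2 W W2 => [[]//] ? [[]//] ? [[]//] ? [[]//] ?; congr pair; apply: val_inj.
move=> /andP[/forallP HW /forallP HM] /andP[/forallP HW2 /forallP HM2].
have [c /andP[c1 c2]] := third (isT : 2 < n.+3) W W2.
have [d /andP[d1 d2]] := third (isT : 2 < n.+3) M M2.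
have E1 := implyP (HW c) c1; have E2 := implyP (HW2 c) c2.
have E3 := implyP (HM d) d1; have E4 := implyP (HM2 d) d2.
congr pair.
  apply: (@perm_inj _ (women_pref p c)); apply: val_inj => /=.
  by rewrite (eqP E1) (eqP E2).
apply: (@perm_inj _ (men_pref p d)); apply: val_inj => /=.
by rewrite (eqP E3) (eqP E4).
Qed.

Lemma card_sum (T : finType) (P : pred T) : #|P| = \sum_x (P x : nat).
Proof. rewrite -sum1_card big_mkcond; apply: eq_bigr => x _. by rewrite (_ : (x \in P) = P x) //; case: (P x). Qed.

Lemma per_p n (hn : n != 2) (p : profile n) :
  #|[pred x : 'I_n * 'I_n | outcasts p x.1 x.2]| = has_outcasts p.
Proof.
case: (boolP (has_outcasts p)) => H /=.
  case/existsP: H => M /existsP [W HMW].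
  rewrite (eq_card (B:=pred1 (M, W))) ?card1 // => -[M2 W2] /=; rewrite !inE.
  apply/idP/eqP => [H2|[-> ->]] //; exact: out_uniq HMW H2.
apply: eq_card0 => -[M W]; rewrite !inE /=; apply/negP => HMW.
by move/negP: H; apply; apply/existsP; exists M; apply/existsP; exists W.
Qed.

Lemma main_gen n (hn : n != 2) (h1 : 0 < n) :
  #|[pred p : profile n | has_outcasts p]| = n ^ 4 * (n.-1)`! ^ (2 * n).
Proof.
rewrite card_sum.
rewrite (eq_bigr (fun p => \sum_(x : 'I_n * 'I_n) (outcasts p x.1 x.2 : nat))); last first.
  by move=> p _; rewrite -(per_p hn) card_sum.
rewrite exchange_big /=.
rewrite (eq_bigr (fun _ => (n`! * (n.-1)`! ^ n.-1) ^ 2)); last first.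
  by move=> x _; rewrite -card_sum card_out.
rewrite sum_nat_const card_prod !card_ord.
case: n hn h1 => [//|m] _ _ /=.
rewrite factS; generalize m`! => f.
rewrite (_ : f ^ (2 * m.+1) = (f * f ^ m) ^ 2); last by rewrite -expnS -expnM mulnC.
generalize (f ^ m) => g. rewrite !expnS expn0. nia.
Qed.
Definition r2 (b : bool) : ranking 2 := if b then perm (@inj_id 'I_2) else tperm ord0 ord_max.
Definition psi (x : bool * bool * bool * bool) : profile 2 :=
  let: (a, b, c, d) := x in
  ([ffun i : 'I_2 => if i == ord0 then r2 a else r2 b],
   [ffun i : 'I_2 => if i == ord0 then r2 c else r2 d]).
Lemma ord2 (i : 'I_2) : i = ord0 \/ i = ord_max.
Proof. by case: i => [[|[|m]]] Hi; [left|right|by []]; apply/eqP. Qed.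
Lemma ex2 (P : pred 'I_2) : [exists i, P i] = P ord0 || P ord_max.
Proof.
apply/existsP/orP => [[i]|[]] ; last by move=> H; exists ord_max.
  by case: (ord2 i) => -> ; [left|right].
by move=> H; exists ord0.
Qed.
Lemma all2 (P : pred 'I_2) : [forall i, P i] = P ord0 && P ord_max.
Proof.
apply/forallP/andP => [H|[H0 H1] i]; first by split; apply: H.
by case: (ord2 i) => ->.
Qed.
Lemma sum_pair (I J : finType) (F : I * J -> nat) :
  \sum_p F p = \sum_i \sum_j F (i, j).
Proof. by rewrite pair_bigA; apply: eq_bigr => -[]. Qed.
Lemma c2psi : #|[pred x | has_outcasts (psi x)]| = 14.
Proof.
rewrite -sum1_card big_mkcond /= !sum_pair !big_bool /= !inE.
rewrite /has_outcasts /outcasts !ex2 !all2 /= /men_pref /women_pref /= !ffunE /= /r2.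
by rewrite /tperm !permE /=.
Qed.

Definition phi (p : profile 2) : bool * bool * bool * bool :=
  (p.1 ord0 ord0 == ord0, p.1 ord_max ord0 == ord0,
   p.2 ord0 ord0 == ord0, p.2 ord_max ord0 == ord0).

Lemma r2_surj (s : ranking 2) : r2 (s ord0 == ord0) = s.
Proof.
apply/permP => i; rewrite /r2.
have Hm : s ord_max != s ord0 by rewrite (inj_eq perm_inj).
case: (ord2 (s ord0)) Hm => E0; rewrite E0 /= => Hm;
  case: (ord2 (s ord_max)) Hm => Em //=; rewrite Em ?eqxx //= => _;
  rewrite /tperm !permE /=; case: (ord2 i) => ->; rewrite ?E0 ?Em // ?eqxx //.
Qed.

Lemma psiK (p : profile 2) : psi (phi p) = p.
Proof.
case: p => f g; rewrite /phi /psi /=; congr pair; apply/ffunP => i; rewrite ffunE;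
  by case: (ord2 i) => -> /=; rewrite r2_surj.
Qed.

Lemma phiK (x : bool * bool * bool * bool) : phi (psi x) = x.
Proof.
case: x => [[[a b] c] d]; rewrite /phi /psi /= !ffunE /=.
by case: a; case: b; case: c; case: d; rewrite /r2 /tperm !permE.
Qed.

Lemma c2 : #|[pred p : profile 2 | has_outcasts p]| = 14.
Proof.
rewrite -c2psi -(card_imset _ (can_inj phiK)).
apply: eq_card => p; rewrite !inE; apply/idP/imsetP => [H|[x Hx ->]] //.
by exists (phi p); rewrite ?inE psiK.
Qed.

Theorem mainTheorem8 (n : nat) (hn : 1 <= n) :
  #|[pred p : profile n | has_outcasts p]| =
  (if n == 2 then 14 else n ^ 4 * (n.-1)`! ^ (2 * n)).
Proof.
case: eqP => [->|/eqP H]; first exact: c2.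
exact: main_gen.
Qed.
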